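(* For each $n\in\mathbb N$, $$1\le\liminf_{x\to+\infty}\frac{\mathbb P^T_n(x)}{\mathrm{Diag}\,\mathbb P(x)}\le\limsup_{x\to+\infty}\frac{\mathbb P^T_n(x)}{\mathrm{Diag}\,\mathbb P(x)}\le2.$$ In particular, $\mathrm{Diag}\,\mathbb P(x)=\Theta\left(\mathbb P^T_n(x)\right)$ as $x\to+\infty$.
   Context: Let $p_n$ denote the $n$-th prime number. Define $p^{(0)}_n=n$ and recursively $p^{(k+1)}_n=p_{p^{(k)}_n}$ for $k\in\mathbb N_0$. Let $\mathbb P^T_n=\{p^{(k)}_n:k\in\mathbb N\}$ and $\mathrm{Diag}\,\mathbb P=\{p^{(k)}_k:k\in\mathbb N\}$. For $A\subset\mathbb N$ and $x\ge1$, $A(x)=\#\{a\le x:a\in A\}$. *)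

(* Defs.v *)
From HB Require Import structures.
From mathcomp Require Import all_boot all_order all_algebra.
From mathcomp Require Import all_classical all_reals all_analysis.
Set Implicit Arguments. Unset Strict Implicit. Unset Printing Implicit Defensive.
Import Order.TTheory GRing.Theory Num.Theory.
Local Open Scope ring_scope.

Lemma exists_prime_above (m : nat) : exists p, (m < p)%N && prime p.
Proof. by case: (prime_above m) => p h1 h2; exists p; rewrite h1 h2. Qed.

Definition next_prime (m : nat) : nat := ex_minn (exists_prime_above m).

(* p_n = the n-th prime, p_1 = 2, p_2 = 3, ... (p_0 = 1 is a junk value). *)
Definition nth_prime (n : nat) : nat := iter n next_prime 1%N.

Definition prime_iter (k n : nat) : nat := iter k nth_prime n.

Definition PT (n : nat) : set nat := [set m | exists2 k, (1 <= k)%N & prime_iter k n = m].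

Definition DiagP : set nat := [set m | exists2 k, (1 <= k)%N & prime_iter k k = m].

Definition count_upto {R : realType} (A : set nat) (x : R) : nat :=
  count (fun a : nat => (a%:R <= x) && `[< A a >]) (iota 0 (Num.truncn x).+1).

(* Main.v *)
Require Import Defs.
From HB Require Import structures.
From mathcomp Require Import all_boot all_order all_algebra.
From mathcomp Require Import all_classical all_reals all_analysis.
From mathcomp Require Import zify.
Import Order.TTheory GRing.Theory Num.Theory.
Import numFieldNormedType.Exports.
Local Open Scope ring_scope.

Lemma next_prime_gt m : (m < next_prime m)%N.
Proof. by rewrite /next_prime; case: ex_minnP => p /andP[]. Qed.

Lemma nth_prime_lt m : (nth_prime m < nth_prime m.+1)%N.
Proof. by rewrite /nth_prime iterS next_prime_gt. Qed.

Lemma nth_prime_mono : {homo nth_prime : a b / (a <= b)%N}.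
Proof. exact: (homo_leq leqnn leq_trans (fun i => ltnW (nth_prime_lt i))). Qed.

Lemma nth_prime_ge m : (m < nth_prime m)%N.
Proof. elim: m => [//|m IH]; exact: leq_ltn_trans IH (nth_prime_lt m). Qed.

Lemma pi_lt k n : (prime_iter k n < prime_iter k.+1 n)%N.
Proof. by rewrite /prime_iter iterS nth_prime_ge. Qed.

Lemma pi_monok n : {homo (fun k => prime_iter k n) : a b / (a <= b)%N}.
Proof. exact: (homo_leq leqnn leq_trans (fun i => ltnW (pi_lt i n))). Qed.

Lemma pi_monon k : {homo prime_iter k : a b / (a <= b)%N}.
Proof. elim: k => [//|k IH] a b ab; rewrite /prime_iter !iterS; exact/nth_prime_mono/IH. Qed.

Lemma pi_ge k n : (k <= prime_iter k n)%N.
Proof. elim: k => [//|k IH]; exact: leq_ltn_trans IH (pi_lt k n). Qed.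

Lemma piD a b n : prime_iter (a + b) n = prime_iter a (prime_iter b n).
Proof. by rewrite /prime_iter iterD. Qed.

Lemma diag_lt k : (prime_iter k k < prime_iter k.+1 k.+1)%N.
Proof. apply: leq_trans (pi_lt k k) _; exact: pi_monon. Qed.

Section Count.
Variable g : nat -> nat.
Hypothesis gS : forall k, (g k < g k.+1)%N.
Let S : set nat := [set m | exists2 k, (1 <= k)%N & g k = m].

Lemma g_mono : {homo g : a b / (a <= b)%N}.
Proof. exact: (homo_leq leqnn leq_trans (fun i => ltnW (gS i))). Qed.
Lemma g_smono : {homo g : a b / (a < b)%N}.
Proof. exact: (homo_ltn ltn_trans gS). Qed.

Definition C m := count (fun a => `[< S a >]) (iota 0 m.+1).

Lemma C_spec m : forall k, (1 <= k)%N -> (k <= C m)%N = (g k <= m)%N.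
Proof.
elim: m => [|m IH] k k1.
  have -> : C 0 = 0%N.
    rewrite /C /= addn0; case: asboolP => //= -[j j1 gj].
    by have := g_smono _ _ j1; rewrite gj ltn0.
  by have := g_mono _ _ k1; have := gS 0; lia.
have -> : C m.+1 = (C m + `[< S m.+1 >])%N.
  by rewrite /C -addn1 iotaD count_cat /= addn0.
case: asboolP => [[j j1 gj]|nS] /=.
  have Cm : C m = j.-1.
    case: j j1 gj => [//|j] _ gj /=.
    apply/eqP; rewrite eqn_leq; apply/andP; split.
      case: (posnP (C m)) => [->//|C0].
      have := IH (C m) C0; rewrite leqnn => /esym H.
      by rewrite -ltnS ltnNge; apply/negP => /(g_mono _ _); rewrite gj; lia.
    case: (posnP j) => [->//|j0].
    by rewrite IH //; have := gS j; lia.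
  rewrite Cm addn1 prednK //.
  apply/idP/idP => [kj|].
    by rewrite -gj; exact: g_mono.
  by rewrite -gj; apply: contraTT; rewrite -!ltnNge; exact: g_smono.
rewrite addn0 IH // [RHS]leq_eqVlt ltnS.
case: eqP => //= E; exfalso; apply: nS; by exists k.
Qed.
End Count.
Local Open Scope classical_set_scope.
Lemma count_spec (R : realType) (g : nat -> nat) (gS : forall k, (g k < g k.+1)%N) (x : R) k :
  (1 <= k)%N ->
  (k <= count_upto [set m | exists2 k, (1 <= k)%N & g k = m] x)%N = ((g k)%:R <= x).
Proof.
move=> k1; rewrite /count_upto.
have [x0|xlt0] := leP 0 x.
  rewrite (@eq_in_count nat _ (fun a : nat => `[< [set m : nat | exists2 k, (1 <= k)%N & g k = m] a >])); last first.
    move=> a; rewrite mem_iota /= add0n ltnS => ha.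
    by rewrite -truncn_ge_nat // ha.
  by rewrite -/(C g _) C_spec // truncn_ge_nat.
have -> : Num.truncn x = 0%N by rewrite truncn_floor leNgt xlt0.
rewrite (@eq_in_count nat _ pred0); last first.
  move=> a; rewrite mem_iota ltnS leqn0 => /eqP -> /=.
  by rewrite [X in X && _](_ : _ = false) // leNgt xlt0.
rewrite count_pred0 leqn0; case: k k1 => // k _ /=.
by apply/esym/negbTE; rewrite -ltNge (lt_le_trans xlt0).
Qed.
Section Main.
Variable R : realType.
Variable n : nat.

Lemma A_spec (x : R) k : (1 <= k)%N ->
  (k <= count_upto (PT n) x)%N = ((prime_iter k n)%:R <= x).
Proof. exact: (@count_spec R (fun k => prime_iter k n) (fun k => pi_lt k n) x k). Qed.

Lemma D_spec (x : R) k : (1 <= k)%N ->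
  (k <= count_upto DiagP x)%N = ((prime_iter k k)%:R <= x).
Proof. exact: (@count_spec R (fun k => prime_iter k k) diag_lt x k). Qed.

Lemma I1 (x : R) : (count_upto DiagP x <= count_upto (PT n) x + n)%N.
Proof.
set d := count_upto DiagP x.
have [->//|d0] := posnP d.
have hd := D_spec x d d0; rewrite leqnn in hd.
have [dn|nd] := leqP d n; first by lia.
suff : (d <= count_upto (PT n) x)%N by move=> h; exact: leq_trans h (leq_addr _ _).
rewrite A_spec //; apply: le_trans (esym hd) ; rewrite ler_nat; apply: pi_monon; exact: ltnW.
Qed.

Lemma I2 (x : R) : (count_upto (PT n) x <= (count_upto DiagP x).*2.+1)%N.
Proof.
set a := count_upto (PT n) x.
have ha := odd_double_half a.
set k := a./2 in ha *.
have [k0|k0] := posnP k.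
  by move: ha; rewrite k0 /=; case: (odd a) => /= <-.
have a1 : (1 <= a)%N by rewrite -ha -addnn; lia.
have hx := A_spec x a a1; rewrite leqnn in hx.
suff : (k <= count_upto DiagP x)%N.
  by move=> h; rewrite -ha -!addnn; case: (odd a) => /=; lia.
rewrite D_spec //; apply: le_trans (esym hx); rewrite ler_nat.
apply: (leq_trans (pi_monon k _ _ (pi_ge k n))).
rewrite -piD; apply: pi_monok; rewrite -ha -addnn; lia.
Qed.
End Main.
From mathcomp Require Import lra.
Section Real.
Variable R : realType.
Variable n : nat.
Local Notation A x := (count_upto (PT n) x).
Local Notation D x := (count_upto DiagP x).

Lemma I1R (x : R) : (D x)%:R <= (A x)%:R + n%:R :> R.
Proof. by rewrite -natrD ler_nat I1. Qed.

Lemma I2R (x : R) : (A x)%:R <= 2 * (D x)%:R + 1 :> R.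
Proof.
have := @I2 R n x; rewrite -(ler_nat R) -addn1 -muln2 natrD natrM.
by rewrite mulrC.
Qed.

Lemma bounds (e : R) : 0 < e -> exists x0 : R, forall x, x0 <= x ->
  1 - e <= (A x)%:R / (D x)%:R <= 2 + e.
Proof.
move=> e0.
set K := (Num.truncn ((n.+1)%:R / e)).+1.
exists (prime_iter K K)%:R => x hx.
have KD : (K <= D x)%N by rewrite D_spec.
have hK : (n.+1)%:R / e < K%:R := truncnS_gt _.
have hK' : (n.+1)%:R < e * K%:R by rewrite mulrC -ltr_pdivrMr.
have KDr : K%:R <= (D x)%:R :> R by rewrite ler_nat.
have eKD : e * K%:R <= e * (D x)%:R by rewrite ler_wpM2l // ltW.
have D0 : 0 < (D x)%:R :> R by rewrite ltr0n (leq_trans _ KD).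
have h1 := I1R x; have h2 := I2R x.
rewrite mulrSr in hK'.
apply/andP; split.
  rewrite ler_pdivlMr //.
  rewrite mulrBl mul1r lerBlDr (le_trans h1) // lerD2l.
  have h3 := lt_le_trans hK' eKD.
  by apply: ltW; apply: le_lt_trans h3; rewrite lerDl.
rewrite ler_pdivrMr // mulrDl (le_trans h2) // lerD2l.
have h3 := lt_le_trans hK' eKD.
by apply: ltW; apply: le_lt_trans h3; rewrite lerDr.
Qed.
End Real.
Theorem theorem17 (R : realType) (n : nat) (hn : (1 <= n)%N) :
  let f := fun x : R => ((count_upto (PT n) x)%:R / (count_upto DiagP x)%:R : R)%:E in
  [/\ (1%:E <= limf_einf f (pinfty_nbhs R))%E,
      (limf_einf f (pinfty_nbhs R) <= limf_esup f (pinfty_nbhs R))%E,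
      (limf_esup f (pinfty_nbhs R) <= 2%:E)%E
    & exists c1 c2 x0 : R, [/\ 0 < c1, 0 < c2 &
        forall x : R, x0 <= x ->
          c1 * (count_upto (PT n) x)%:R <= (count_upto DiagP x)%:R
          /\ (count_upto DiagP x)%:R <= c2 * (count_upto (PT n) x)%:R]].
Proof.
move=> f.
have nb x0 : pinfty_nbhs R [set x | x0 < x].
  by exists x0; split; [exact: num_real | by []].
split.
- apply/lee_subgt0Pr => e e0.
  have [x0 hx0] := @bounds R n e e0.
  rewrite limf_einfE; apply: le_ereal_sup_tmp.
  exists (ereal_inf (f @` [set x | x0 < x])); first by exists [set x | x0 < x].
  apply: le_ereal_inf_tmp => _ [x hx <-].
  rewrite /f -EFinB lee_fin.
  by have /andP[] := hx0 x (ltW hx).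
- rewrite limf_einfE limf_esupE.
  apply: ge_ereal_sup => _ [V [M1 [_ hV]] <-].
  apply: le_ereal_inf_tmp => _ [W [M2 [_ hW]] <-].
  set x := Num.max M1 M2 + 1.
  have Vx : V x.
    apply: hV; apply: (@le_lt_trans _ _ (Num.max M1 M2)); first by rewrite le_max lexx.
    by rewrite /x ltrDl.
  have Wx : W x.
    apply: hW; apply: (@le_lt_trans _ _ (Num.max M1 M2)); first by rewrite le_max lexx orbT.
    by rewrite /x ltrDl.
  apply: (@le_trans _ _ (f x)).
    by apply: ereal_inf_lbound; exists x.
  by apply: ereal_sup_ubound; exists x.
- apply/lee_addgt0Pr => e e0.
  have [x0 hx0] := @bounds R n e e0.
  rewrite limf_esupE; apply: ge_ereal_inf.
  exists (ereal_sup (f @` [set x | x0 < x])); first by exists [set x | x0 < x].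
  apply: ge_ereal_sup => _ [x hx <-].
  rewrite /f -EFinD lee_fin.
  by have /andP[] := hx0 x (ltW hx).
exists (1/3), (n.+1%:R), (prime_iter 1 n + prime_iter 1 1)%:R; split => //.
move=> x hx.
have A1 : (1 <= count_upto (PT n) x)%N.
  by rewrite A_spec // (le_trans _ hx) // ler_nat leq_addr.
have D1 : (1 <= count_upto DiagP x)%N.
  by rewrite D_spec // (le_trans _ hx) // ler_nat leq_addl.
have h1 := @I1R R n x; have h2 := @I2R R n x.
have A1r : 1 <= (count_upto (PT n) x)%:R :> R by rewrite ler1n.
have D1r : 1 <= (count_upto DiagP x)%:R :> R by rewrite ler1n.
have n0 : 0 <= n%:R :> R by [].
split; first lra.
rewrite mulrSr mulrDl mul1r.
apply: (le_trans h1); rewrite addrC lerD2r.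
by rewrite -[X in X <= _]mulr1 ler_wpM2l.
Qed.
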